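(* For every $n$ there are logistic regression instances $Z\in\mathbb{R}^{n\times 2}$, $Y\in\{-1,1\}^n$ such that any coreset of $(Z,Y)$ for logistic regression (any weighted point set whose logistic loss approximates $\mathcal{L}(\beta\mid Z,Y)$ for all $\beta$ within a finite multiplicative factor, whether or not its points are input points) consists of at least $\Omega(n/\log n)$ points.
   Context: The logistic regression negative log-likelihood is $\mathcal{L}(\beta\mid Z,Y)=\sum_{i=1}^n\ln(1+\exp(-Y_iZ_i\beta))$ for $\beta\in\mathbb{R}^d$, where $Z_i$ is the $i$-th row of $Z$. A weighted set $C\in\mathbb{R}^{k\times d}$ with weights $u\in\mathbb{R}^k_{>0}$ evaluates the loss as $\sum_{j=1}^k u_j\ln(1+\exp(c_j\beta))$ where $c_j$ are the rows of $C$ (labels folded into the rows as $c=-Y_iZ_i$). *)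

(* Defs.v *)
From Stdlib Require Import Reals.
Open Scope R_scope.

Fixpoint rsum (n : nat) (f : nat -> R) : R :=
  match n with
  | O => 0
  | S m => rsum m f + f m
  end.

Definition dot2 (a b : R * R) : R := fst a * fst b + snd a * snd b.

Definition logloss (n : nat) (Z : nat -> R * R) (Y : nat -> R) (beta : R * R) : R :=
  rsum n (fun i => ln (1 + exp (- (Y i * dot2 (Z i) beta)))).

Definition wloss (k : nat) (C : nat -> R * R) (u : nat -> R) (beta : R * R) : R :=
  rsum k (fun j => u j * ln (1 + exp (dot2 (C j) beta))).

Definition is_coreset (n : nat) (Z : nat -> R * R) (Y : nat -> R)
    (k : nat) (C : nat -> R * R) (u : nat -> R) : Prop :=
  (forall j, (j < k)%nat -> 0 < u j) /\
  exists alpha : R, 1 <= alpha /\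
    forall beta : R * R,
      logloss n Z Y beta / alpha <= wloss k C u beta /\
      wloss k C u beta <= alpha * logloss n Z Y beta.

(* Main.v *)
Require Import Defs.
From Stdlib Require Import Reals Lra Lia List Classical.
Open Scope R_scope.

Lemma ln_le' : forall x y, 0 < x -> x <= y -> ln x <= ln y.
Proof. intros x y Hx Hxy. destruct (Req_dec x y) as [->|H]; [lra|].
  left; apply ln_increasing; lra. Qed.

Lemma exp_ge1 : forall x, 1 + x <= exp x.
Proof. intros x. destruct (Req_dec x 0) as [->|H]. rewrite exp_0; lra.
  left; now apply exp_ineq1. Qed.

Lemma lnexp_le : forall t, ln (1 + exp t) <= exp t.
Proof. intros t. rewrite <- (ln_exp (exp t)) at 2. apply ln_le'.
  pose proof (exp_pos t); lra. apply exp_ge1. Qed.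

Lemma lnexp_pos : forall t, 0 <= ln (1 + exp t).
Proof. intros t. rewrite <- ln_1. apply ln_le'. lra. pose proof (exp_pos t); lra. Qed.

Lemma ln1x_ge : forall x, 0 <= x <= 1 -> x / 2 <= ln (1 + x).
Proof. intros x Hx.
  assert (H1 : 1 - x/2 <= exp (-(x/2))) by (pose proof (exp_ge1 (-(x/2))); lra).
  assert (H2 : exp (x/2) * exp (-(x/2)) = 1) by (rewrite <- exp_plus; replace (x/2 + -(x/2)) with 0 by ring; apply exp_0).
  assert (H3 : exp (x/2) <= 1 + x).
  { pose proof (exp_pos (x/2)). nra. }
  rewrite <- (ln_exp (x/2)). apply ln_le'. apply exp_pos. exact H3. Qed.

Lemma lnexp_ge : forall t, t <= 0 -> exp t / 2 <= ln (1 + exp t).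
Proof. intros t Ht. apply ln1x_ge. split. left; apply exp_pos.
  rewrite <- exp_0. destruct (Req_dec t 0) as [->|]; [lra|]. left; apply exp_increasing; lra. Qed.

Lemma rsum_nonneg : forall n f, (forall i, (i < n)%nat -> 0 <= f i) -> 0 <= rsum n f.
Proof. induction n; simpl; intros f H. lra. pose proof (IHn f (fun i Hi => H i ltac:(lia))).
  pose proof (H n ltac:(lia)); lra. Qed.

Lemma rsum_le : forall n f g, (forall i, (i < n)%nat -> f i <= g i) -> rsum n f <= rsum n g.
Proof. induction n; simpl; intros f g H. lra. pose proof (IHn f g (fun i Hi => H i ltac:(lia))).
  pose proof (H n ltac:(lia)); lra. Qed.

Lemma rsum_term : forall n f j, (forall i, (i < n)%nat -> 0 <= f i) -> (j < n)%nat -> f j <= rsum n f.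
Proof. induction n; simpl; intros f j H Hj. lia.
  destruct (Nat.eq_dec j n) as [->|Hne].
  - pose proof (rsum_nonneg n f (fun i Hi => H i ltac:(lia))); lra.
  - pose proof (IHn f j (fun i Hi => H i ltac:(lia)) ltac:(lia)). pose proof (H n ltac:(lia)); lra. Qed.

Lemma rsum_const : forall n c, rsum n (fun _ => c) = INR n * c.
Proof. induction n; intros c; cbn [rsum]. simpl; ring. rewrite IHn, S_INR. ring. Qed.

Lemma rsum_scal : forall n f c, rsum n (fun i => f i * c) = rsum n f * c.
Proof. induction n; simpl; intros f c. ring. rewrite IHn. ring. Qed.

Lemma dot2_scal : forall c d r, dot2 c (r * fst d, r * snd d) = r * dot2 c d.
Proof. intros. unfold dot2; simpl; ring. Qed.

Definition FL n (cc : nat -> R * R) beta := rsum n (fun l => ln (1 + exp (dot2 (cc l) beta))).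

Lemma stepA : forall n cc k C u alpha d m,
  0 < alpha -> (forall j, (j < k)%nat -> 0 < u j) ->
  (forall beta, wloss k C u beta <= alpha * FL n cc beta) ->
  m < 0 -> (forall l, (l < n)%nat -> dot2 (cc l) d <= m) ->
  forall j, (j < k)%nat -> dot2 (C j) d <= m.
Proof.
  intros n cc k C u alpha d m Ha Hu HW Hm Hl j Hj.
  apply Rnot_lt_le; intro Hs. set (s := dot2 (C j) d) in *.
  set (s' := Rmin s 0).
  assert (Hs' : m < s') by (unfold s', Rmin; destruct Rle_dec; lra).
  assert (Hs'0 : s' <= 0) by (unfold s', Rmin; destruct Rle_dec; lra).
  assert (Hs's : s' <= s) by (unfold s', Rmin; destruct Rle_dec; lra).
  pose proof (Hu j Hj) as Huj.
  assert (HnR : 0 <= INR n) by apply pos_INR.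
  set (A := 2 * alpha * INR n / u j + 1).
  assert (HA : 0 < A) by (unfold A; assert (0 <= 2 * alpha * INR n / u j) by (apply Rmult_le_pos; [nra | left; apply Rinv_0_lt_compat; lra]); lra).
  set (r := A / (s' - m)).
  assert (Hr : 0 < r) by (unfold r; apply Rmult_lt_0_compat; [lra | apply Rinv_0_lt_compat; lra]).
  assert (Hrs : r * (s' - m) = A) by (unfold r; field; lra).
  specialize (HW (r * fst d, r * snd d)).
  assert (HF : FL n cc (r * fst d, r * snd d) <= INR n * exp (r * m)).
  { unfold FL. rewrite <- rsum_const. apply rsum_le. intros l Hl'.
    rewrite dot2_scal. eapply Rle_trans. apply lnexp_le.
    destruct (Req_dec (r * dot2 (cc l) d) (r*m)) as [E|E]. rewrite E; lra.
    left; apply exp_increasing. pose proof (Hl l Hl'). nra. }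
  assert (HWl : u j * (exp (r * s') / 2) <= wloss k C u (r * fst d, r * snd d)).
  { unfold wloss. eapply Rle_trans; [| apply (rsum_term k (fun j0 => u j0 * ln (1 + exp (dot2 (C j0) (r * fst d, r * snd d)))) j)].
    - simpl. rewrite dot2_scal. apply Rmult_le_compat_l. lra.
      eapply Rle_trans. apply lnexp_ge. nra. apply ln_le'.
      pose proof (exp_pos (r*s')); lra.
      apply Rplus_le_compat_l. fold s. destruct (Req_dec (r*s') (r*s)) as [E|E]. rewrite E; lra.
      left; apply exp_increasing. fold s. apply Rmult_lt_compat_l; [lra|]. destruct Hs's as [?|Heq]; [assumption|]. rewrite Heq in E. lra.
    - intros i Hi. simpl. pose proof (Hu i Hi). pose proof (lnexp_pos (dot2 (C i) (r * fst d, r * snd d))). nra.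
    - exact Hj. }
  assert (Hexp : exp (r * s') = exp A * exp (r * m)).
  { rewrite <- exp_plus. f_equal. lra. }
  assert (HeA : A < exp A) by (pose proof (exp_ge1 A); lra).
  assert (Hem := exp_pos (r * m)).
  assert (Hk : alpha * INR n < u j * exp A / 2).
  { assert (u j * A = 2 * alpha * INR n + u j) by (unfold A; field; lra). nra. }
  rewrite Hexp in HWl. nra.
Qed.

Lemma gap : forall k (C : nat -> R*R) d m, (forall j, (j < k)%nat -> dot2 (C j) d < m) ->
  exists delta, 0 < delta /\ forall j, (j < k)%nat -> dot2 (C j) d <= m - delta.
Proof. induction k; intros C d m H.
  - exists 1. split. lra. intros; lia.
  - destruct (IHk C d m (fun j Hj => H j ltac:(lia))) as [de [Hde Hj]].
    pose proof (H k ltac:(lia)).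
    exists (Rmin de (m - dot2 (C k) d)). split. unfold Rmin; destruct Rle_dec; lra.
    intros j Hjk. destruct (Nat.eq_dec j k) as [->|Hne].
    + unfold Rmin; destruct Rle_dec; lra.
    + pose proof (Hj j ltac:(lia)). unfold Rmin; destruct Rle_dec; lra. Qed.

Lemma stepB : forall n cc k C u alpha d m i0,
  0 < alpha -> (forall j, (j < k)%nat -> 0 < u j) ->
  (forall beta, FL n cc beta / alpha <= wloss k C u beta) ->
  m <= 0 -> (forall l, (l < n)%nat -> 0 <= ln (1 + exp (dot2 (cc l) d))) ->
  (i0 < n)%nat -> dot2 (cc i0) d = m ->
  (forall j, (j < k)%nat -> dot2 (C j) d < m) -> False.
Proof.
  intros n cc k C u alpha d m i0 Ha Hu HW Hm _ Hi0 Hc HC.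
  destruct (gap k C d m HC) as [de [Hde Hg]].
  set (U := rsum k u).
  assert (HU : 0 <= U) by (apply rsum_nonneg; intros; left; auto).
  set (r := 2 * alpha * U / de + 1).
  assert (Hr : 1 <= r) by (unfold r; assert (0 <= 2 * alpha * U / de) by (apply Rmult_le_pos; [nra | left; apply Rinv_0_lt_compat; lra]); lra).
  specialize (HW (r * fst d, r * snd d)).
  set (E := exp (r * m)). set (D := exp (r * de)).
  assert (HE : 0 < E) by apply exp_pos. assert (HD : 0 < D) by apply exp_pos.
  assert (HF : E / 2 <= FL n cc (r * fst d, r * snd d)).
  { unfold FL. eapply Rle_trans; [| apply (rsum_term n _ i0)].
    - simpl. rewrite dot2_scal, Hc. apply lnexp_ge. nra.
    - intros; apply lnexp_pos.
    - exact Hi0. }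
  assert (HWu : wloss k C u (r * fst d, r * snd d) <= U * exp (r * (m - de))).
  { unfold wloss, U. rewrite <- rsum_scal. apply rsum_le. intros j Hj.
    pose proof (Hu j Hj). rewrite dot2_scal. apply Rmult_le_compat_l. lra.
    eapply Rle_trans. apply lnexp_le. pose proof (Hg j Hj).
    destruct (Req_dec (r * dot2 (C j) d) (r * (m - de))) as [Q|Q]. rewrite Q; lra.
    left; apply exp_increasing. apply Rmult_lt_compat_l. lra.
    destruct H0 as [?|Q']; [assumption|]. rewrite Q' in Q. lra. }
  assert (Hsplit : exp (r * (m - de)) * D = E).
  { unfold D, E. rewrite <- exp_plus. f_equal. ring. }
  assert (HDbig : 2 * alpha * U < D).
  { unfold D. pose proof (exp_ge1 (r * de)).
    assert (r * de = 2 * alpha * U + de) by (unfold r; field; lra). lra. }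
  assert (H1 : E / 2 <= alpha * (U * exp (r * (m - de)))).
  { apply Rmult_le_reg_r with (/ alpha). apply Rinv_0_lt_compat; lra.
    replace (alpha * (U * exp (r * (m - de))) * / alpha) with (U * exp (r * (m - de))) by (field; lra).
    unfold Rdiv in HW. eapply Rle_trans; [| eapply Rle_trans; [exact HW | exact HWu]].
    apply Rmult_le_compat_r. left; apply Rinv_0_lt_compat; lra. exact HF. }
  assert (H2 : E / 2 * D <= alpha * U * E).
  { rewrite <- Hsplit. pose proof (exp_pos (r * (m - de))). nra. }
  nra.
Qed.

Lemma rsum_ext : forall n f g, (forall i, (i < n)%nat -> f i = g i) -> rsum n f = rsum n g.
Proof. induction n; simpl; intros f g H. reflexivity.
  rewrite (IHn f g (fun i Hi => H i ltac:(lia))), (H n ltac:(lia)). reflexivity. Qed.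

Definition cc (K : R) (l : nat) : R * R := (INR l, - (INR l * INR l) - K).

Lemma expose : forall n i l e, (i < n)%nat -> (l < n)%nat -> -/2 <= e <= /2 ->
  let K := (INR n + 1) * (INR n + 1) in
  dot2 (cc K l) (2 * INR i + e, 1) <= dot2 (cc K i) (2 * INR i + e, 1) /\
  dot2 (cc K i) (2 * INR i + e, 1) < 0.
Proof. intros n i l e Hi Hl He K. unfold dot2, cc, K; simpl.
  assert (Hxi : 0 <= INR i) by apply pos_INR.
  assert (Hxn : INR i <= INR n) by (apply le_INR; lia).
  split; [| nra].
  destruct (Nat.lt_trichotomy l i) as [Hli|[Hli|Hli]].
  - assert (INR l + 1 <= INR i) by (rewrite <- S_INR; apply le_INR; lia). nra.
  - subst; lra.
  - assert (INR i + 1 <= INR l) by (rewrite <- S_INR; apply le_INR; lia). nra.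
Qed.

Lemma hit : forall n k C u alpha i, (i < n)%nat -> 1 <= alpha ->
  (forall j, (j < k)%nat -> 0 < u j) ->
  let K := (INR n + 1) * (INR n + 1) in
  (forall beta, FL n (cc K) beta / alpha <= wloss k C u beta /\
                wloss k C u beta <= alpha * FL n (cc K) beta) ->
  exists j, (j < k)%nat /\ C j = cc K i.
Proof.
  intros n k C u alpha i Hi Ha Hu K HB.
  assert (HA : forall e, -/2 <= e <= /2 -> forall j, (j < k)%nat ->
     dot2 (C j) (2 * INR i + e, 1) <= dot2 (cc K i) (2 * INR i + e, 1)).
  { intros e He. apply (stepA n (cc K) k C u alpha). lra. exact Hu.
    intro b; apply HB. apply (expose n i i e Hi Hi He).
    intros l Hl; apply (expose n i l e Hi Hl He). }
  apply NNPP; intro Hno.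
  apply (stepB n (cc K) k C u alpha (2 * INR i + 0, 1) (dot2 (cc K i) (2 * INR i + 0, 1)) i).
  lra. exact Hu. intro b; apply HB.
  left; apply (expose n i i 0 Hi Hi ltac:(lra)).
  intros; apply lnexp_pos. exact Hi. reflexivity.
  intros j Hj.
  pose proof (HA 0 ltac:(lra) j Hj) as H0.
  pose proof (HA (/2) ltac:(lra) j Hj) as H1.
  pose proof (HA (-/2) ltac:(lra) j Hj) as H2.
  destruct H0 as [H0|H0]; [exact H0|]. exfalso. apply Hno. exists j. split; [exact Hj|].
  destruct (C j) as [a b] eqn:EC. unfold cc in *. unfold dot2 in *; simpl in *.
  assert (a = INR i) by nra. subst a. f_equal. nra.
Qed.

Theorem corollary3 :
  exists c : R, 0 < c /\ exists N : nat, forall n : nat, (N <= n)%nat ->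
    exists (Z : nat -> R * R) (Y : nat -> R),
      (forall i, (i < n)%nat -> Y i = 1 \/ Y i = -1) /\
      forall (k : nat) (C : nat -> R * R) (u : nat -> R),
        is_coreset n Z Y k C u ->
        c * (INR n / ln (INR n)) <= INR k.
Proof.
  exists 1. split. lra. exists 3%nat. intros n Hn.
  set (K := (INR n + 1) * (INR n + 1)).
  exists (fun l => (- INR l, INR l * INR l + K)), (fun _ => 1).
  split. intros; left; reflexivity.
  intros k C u [Hu [alpha [Ha HB]]].
  assert (HL : forall beta, logloss n (fun l => (- INR l, INR l * INR l + K)) (fun _ => 1) beta = FL n (cc K) beta).
  { intro b. unfold logloss, FL. apply rsum_ext. intros l _. unfold cc, dot2; simpl.
    f_equal; f_equal; f_equal; ring. }
  assert (Hhit : forall i, (i < n)%nat -> exists j, (j < k)%nat /\ C j = cc K i).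
  { intros i Hi. apply (hit n k C u alpha i Hi Ha Hu). intro b. rewrite <- HL. apply HB. }
  assert (Hlen : (n <= k)%nat).
  { rewrite <- (length_seq n 0), <- (length_seq k 0).
    rewrite <- (length_map (cc K) (seq 0 n)), <- (length_map C (seq 0 k)).
    apply NoDup_incl_length.
    - apply NoDup_map_NoDup_ForallPairs. intros a b _ _ E. unfold cc in E.
      injection E; intros _ E1. apply INR_eq; exact E1. apply seq_NoDup.
    - intros x Hx. apply in_map_iff in Hx. destruct Hx as [i [<- Hi]]. apply in_seq in Hi.
      destruct (Hhit i ltac:(lia)) as [j [Hj Ej]]. rewrite <- Ej. apply in_map. apply in_seq. lia. }
  apply le_INR in Hlen.
  assert (H3 : 3 <= INR n) by (replace 3 with (INR 3) by (simpl; ring); apply le_INR; lia).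
  assert (Hln : 1 <= ln (INR n)).
  { rewrite <- ln_exp at 1. apply ln_le'. apply exp_pos. pose proof exp_le_3. lra. }
  rewrite Rmult_1_l. apply Rle_trans with (INR n); [|exact Hlen].
  assert (Hi : / ln (INR n) <= 1) by (rewrite <- Rinv_1; apply Rinv_le_contravar; lra).
  assert (0 < / ln (INR n)) by (apply Rinv_0_lt_compat; lra).
  unfold Rdiv. nra.
Qed.
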